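(* Let $\mathcal{P}=\langle P,\le\rangle$ be a finite bounded poset with $|P|\ge 2$ and $m\in\mathbb{N}$. If $(R^+_{All})^m(\mathcal{P})$ is graded, then $(R^+)^m(\mathcal{P})$ is graded.
   Context: A poset is bounded if it has a least element $\bot$ and greatest element $\top$. The height $H$ of a finite poset is the number of elements in its largest chain. $a\lessdot b$ denotes covering. A bounded poset with top $\top$ and height $H$ is graded if there is $\rho$ into $\{0,\dots,H-1\}$ with $\rho(\top)=0$ and $\rho(a)=\rho(b)-1$ whenever $a\lessdot b$. For $a\in P$, $\uparrow a=\{b:b\ge a\}$, $\downarrow a=\{b:b\le a\}$ as subposets; the standard interval rank is $R^+(a)=[H(\uparrow a)-1,\;H(\mathcal{P})-H(\downarrow a)]$. Weak order: $[x_*,x^*]\le_W[y_*,y^*]$ iff $x_*\le y_*$ and $x^*\le y^*$. The interval rank poset $R^+(\mathcal{P})$ is the set $\{R^+(a):a\in P\}$ ordered by $\ge_W$; $(R^+)^m$ denotes its $m$-fold iteration (applying the construction to the resulting poset each time). $R^+_{All}(\mathcal{P})=\langle P,\le_{R_A}\rangle$ on the same underlying set, where $p<_{R_A}q$ iff $R^+(p)>_W R^+(q)$, and $\le_{R_A}$ is the reflexive closure of $<_{R_A}$; $(R^+_{All})^m$ is its $m$-fold iteration. *)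

(* Defs.v *)
From mathcomp Require Import all_boot.
Set Implicit Arguments. Unset Strict Implicit. Unset Printing Implicit Defensive.

Record fposet (T : eqType) := FPoset { elems : seq T; rle : rel T }.

Section Defs.
Variable T : eqType.
Implicit Types P : fposet T.

Definition is_poset P : Prop :=
  [/\ (forall x, x \in elems P -> rle P x x),
      (forall x y, x \in elems P -> y \in elems P ->
         rle P x y -> rle P y x -> x = y) &
      (forall x y z, x \in elems P -> y \in elems P -> z \in elems P ->
         rle P x y -> rle P y z -> rle P x z)].

Definition is_top P (t : T) : Prop :=
  t \in elems P /\ forall x, x \in elems P -> rle P x t.
Definition is_bot P (b : T) : Prop :=
  b \in elems P /\ forall x, x \in elems P -> rle P b x.

Definition bounded P : Prop :=
  is_poset P /\ (exists t, is_top P t) /\ (exists b, is_bot P b).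

Definition cmp P : rel T := fun x y => rle P x y || rle P y x.

(* height: number of elements of a largest chain (a set of pairwise
   comparable elements); chains are enumerated as masks of the
   duplicate-free carrier. *)
Definition height P : nat :=
  let e := undup (elems P) in
  \max_(b : (size e).-tuple bool | pairwise (cmp P) (mask b e)) size (mask b e).

Definition rlt P (a b : T) : bool := (a != b) && rle P a b.
Definition covers P (a b : T) : Prop :=
  [/\ a \in elems P, b \in elems P, rlt P a b &
      forall c, c \in elems P -> ~ (rlt P a c /\ rlt P c b)].

Definition graded P : Prop :=
  bounded P /\
  exists t, is_top P t /\
  exists rho : T -> nat,
    [/\ rho t = 0,
        (forall a, a \in elems P -> rho a < height P) &
        (forall a b, covers P a b -> rho a = (rho b).+1)].

Definition upset P (a : T) : fposet T :=
  FPoset [seq b <- elems P | rle P a b] (rle P).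
Definition downset P (a : T) : fposet T :=
  FPoset [seq b <- elems P | rle P b a] (rle P).

Definition Rint P (a : T) : (nat * nat)%type :=
  ((height (upset P a)).-1, height P - height (downset P a)).

Definition weakle (x y : (nat * nat)%type) : bool := (x.1 <= y.1) && (x.2 <= y.2).
Definition weaklt (x y : (nat * nat)%type) : bool := (x != y) && weakle x y.

Definition Rplus P : fposet (nat * nat)%type :=
  FPoset [seq Rint P a | a <- elems P] (fun I J => weakle J I).

Definition RAll P : fposet T :=
  FPoset (elems P) (fun p q => (p == q) || weaklt (Rint P q) (Rint P p)).

End Defs.

Fixpoint RAll_iter (T : eqType) (m : nat) (P : fposet T) : fposet T :=
  match m with 0 => P | k.+1 => RAll (RAll_iter k P) end.

(* the carrier type changes after the first application, so the result is
   packaged in a dependent pair *)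
Fixpoint Rplus_iter (T : eqType) (m : nat) (P : fposet T)
  : {U : eqType & fposet U} :=
  match m with
  | 0 => existT (fun U : eqType => fposet U) T P
  | k.+1 => existT (fun U : eqType => fposet U) (nat * nat)%type
              (Rplus (projT2 (Rplus_iter k P)))
  end.

Definition graded_s (X : {U : eqType & fposet U}) : Prop := graded (projT2 X).

(* Main.v *)
Require Import Defs.
From mathcomp Require Import all_boot.
Set Implicit Arguments. Unset Strict Implicit. Unset Printing Implicit Defensive.

Lemma pw_iff (T : eqType) (r : rel T) (s : seq T) : symmetric r -> uniq s ->
  pairwise r s <-> {in s &, forall x y, x != y -> r x y}.
Proof.
move=> rs us.
have -> : pairwise r s = all2rel (fun x y => (x != y) ==> r x y) s.
  rewrite -pairwise_all2rel; last first.
  - by move=> x y; rewrite eq_sym rs.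
  - by move=> x; rewrite eqxx.
  have := pairwise_relI (fun x y => x != y) r s.
  have := pairwise_relI (fun x y => x != y) (fun x y => (x != y) ==> r x y) s.
  rewrite -uniq_pairwise us /= => <- <-.
  by apply: eq_pairwise => x y /=; case: (x != y).
split.
- by move/allrelP => H x y xs ys nxy; have := H x y xs ys; rewrite nxy.
- by move=> H; apply/allrelP => x y xs ys; apply/implyP; apply: H.
Qed.

Section H.
Variable T : eqType.
Implicit Types P : fposet T.
Definition chain (P : fposet T) (s : seq T) : Prop :=
  [/\ uniq s, {subset s <= elems P} & {in s &, forall x y, x != y -> cmp P x y}].

Lemma cmp_sym P : symmetric (cmp P).
Proof. by move=> x y; rewrite /cmp orbC. Qed.

Lemma height_ge P s : chain P s -> size s <= height P.
Proof.
case=> us sP cs.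
rewrite /height.
set e := undup (elems P).
pose b := map_tuple (fun x => x \in s) (in_tuple e).
have pe : perm_eq (mask b e) s.
  rewrite /= -filter_mask; apply: uniq_perm.
  - by rewrite filter_uniq // undup_uniq.
  - by [].
  move=> x; rewrite mem_filter mem_undup.
  by case xs: (x \in s) => //=; apply: sP.
rewrite -(perm_size pe).
apply: (leq_bigmax_cond b).
apply/(pw_iff (cmp_sym P)); first by rewrite (perm_uniq pe).
by move=> x y; rewrite !(perm_mem pe); apply: cs.
Qed.

Lemma height_ex P : exists s, chain P s /\ size s = height P.
Proof.
rewrite /height.
set e := undup (elems P).
have [b bin ->] := @eq_bigmax_cond _
   (fun b : (size e).-tuple bool => pairwise (cmp P) (mask b e))
   (fun b => size (mask b e)) (ltac:(apply/card_gt0P;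
      exists [tuple of nseq (size e) false]; by rewrite unfold_in /= mask_false)).
exists (mask b e); split=> //.
have ub : uniq (mask b e) by rewrite mask_uniq // undup_uniq.
split=> //.
- by move=> x /mem_mask; rewrite mem_undup.
- by apply/(pw_iff (cmp_sym P)).
Qed.
End H.

Section Q.
Variables T U : eqType.

Definition qrel (A : fposet T) (B : fposet U) (f : T -> U) : Prop :=
  [/\ forall x, x \in elems A -> f x \in elems B,
      forall y, y \in elems B -> exists2 x, x \in elems A & f x = y &
      forall p q, p \in elems A -> q \in elems A ->
        rle A p q = (p == q) || (f p != f q) && rle B (f p) (f q)].

Lemma qcmp A B f x y : qrel A B f -> x \in elems A -> y \in elems A -> x != y ->
  cmp A x y = (f x != f y) && cmp B (f x) (f y).
Proof.
case=> _ _ H xA yA nxy; rewrite /cmp !H //.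
have -> : (x == y) = false by apply/negbTE.
have -> : (y == x) = false by rewrite eq_sym; apply/negbTE.
by rewrite /= [f y == f x]eq_sym; case: (f x != f y).
Qed.

Lemma chainAB A B f s : qrel A B f -> chain A s -> chain B (map f s).
Proof.
move=> q [us sub cs].
have inj : {in s &, injective f}.
  move=> x y xs ys fxy; apply/eqP; apply/negPn/negP => nxy.
  have := cs x y xs ys nxy; rewrite (qcmp q) ?sub // fxy eqxx //.
have [fA _ _] := q.
split.
- by rewrite (map_inj_in_uniq inj).
- by move=> a /mapP[x xs ->]; apply/fA/sub.
move=> a b /mapP[x xs ->] /mapP[y ys ->] nab.
have nxy : x != y by apply: contraNneq nab => ->.
by have := cs x y xs ys nxy; rewrite (qcmp q) ?sub // => /andP[].
Qed.

Lemma chainBA A B f s : qrel A B f -> chain B s ->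
  exists s', chain A s' /\ map f s' = s.
Proof.
move=> q; have [fA fB _] := q.
elim: s => [|a s IH]; first by exists [::].
case=> /= /andP[nas us] sub cs.
have cB : chain B s.
  split=> // [y ys|y z ys zs]; first by apply: sub; rewrite inE ys orbT.
  by apply: cs; rewrite inE ?ys ?zs orbT.
have [s' [[us' sub' cs'] ms]] := IH cB.
have [x xA fx] := fB a (sub a (mem_head _ _)).
have xn : x \notin s'.
  by apply: contra nas => xs; rewrite -ms -fx map_f.
exists (x :: s'); split; last by rewrite /= fx ms.
split; first by rewrite /= xn us'.
- by move=> y; rewrite inE => /orP[/eqP -> //|]; apply: sub'.
have key : forall y, y \in s' -> cmp A x y.
  move=> y ys.
  have nxy : x != y by apply: contraNneq xn => ->.
  have fys : f y \in s by rewrite -ms map_f.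
  have nfy : a != f y by apply: contraNneq nas => ->.
  rewrite (qcmp q) ?(sub' y ys) // fx nfy /=.
  by apply: cs => //; rewrite inE ?fys ?orbT ?eqxx.
move=> y z; rewrite !inE => /orP[/eqP->|ys] /orP[/eqP->|zs]; rewrite ?eqxx //.
- by move=> _; apply: key.
- by move=> _; rewrite cmp_sym; apply: key.
- by apply: cs'.
Qed.

Lemma qheight A B f : qrel A B f -> height A = height B.
Proof.
move=> q; apply/eqP; rewrite eqn_leq; apply/andP; split.
- have [s [cs <-]] := height_ex A.
  by rewrite -(size_map f); apply: height_ge; apply: chainAB cs.
- have [s [cs <-]] := height_ex B.
  have [s' [cs' <-]] := chainBA q cs.
  by rewrite size_map; apply: height_ge.
Qed.
End Q.

Section Q2.
Variables T U : eqType.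
Implicit Types (A : fposet T) (B : fposet U).

Lemma qupset A B f p : qrel A B f -> (forall y, y \in elems B -> rle B y y) ->
  p \in elems A -> qrel (upset A p) (upset B (f p)) f.
Proof.
move=> q refl pA; have [fA fB H] := q.
have Hpp : rle A p p by rewrite H // eqxx.
split=> /=.
- move=> x; rewrite !mem_filter => /andP[px xA]; rewrite fA // andbT.
  move: px; rewrite H // => /orP[/eqP<-|/andP[_ //]]; exact/refl/fA.
- move=> y; rewrite mem_filter => /andP[py yB].
  have [x xA fx] := fB y yB.
  case: (eqVneq y (f p)) => [->|nyp]; first by exists p; rewrite // mem_filter Hpp.
  exists x => //; rewrite mem_filter xA andbT H // fx py [f p == y]eq_sym nyp orbT //.
- move=> x y; rewrite !mem_filter => /andP[_ xA] /andP[_ yA]; exact: H.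
Qed.

Lemma qdownset A B f p : qrel A B f -> (forall y, y \in elems B -> rle B y y) ->
  p \in elems A -> qrel (downset A p) (downset B (f p)) f.
Proof.
move=> q refl pA; have [fA fB H] := q.
have Hpp : rle A p p by rewrite H // eqxx.
split=> /=.
- move=> x; rewrite !mem_filter => /andP[px xA]; rewrite fA // andbT.
  move: px; rewrite H // => /orP[/eqP->|/andP[_ //]]; exact/refl/fA.
- move=> y; rewrite mem_filter => /andP[py yB].
  have [x xA fx] := fB y yB.
  case: (eqVneq y (f p)) => [->|nyp]; first by exists p; rewrite // mem_filter Hpp.
  exists x => //; rewrite mem_filter xA andbT H // fx py nyp orbT //.
- move=> x y; rewrite !mem_filter => /andP[_ xA] /andP[_ yA]; exact: H.
Qed.

Lemma qRint A B f p : qrel A B f -> (forall y, y \in elems B -> rle B y y) ->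
  p \in elems A -> Rint A p = Rint B (f p).
Proof.
move=> q refl pA.
by rewrite /Rint (qheight q) (qheight (qupset q refl pA)) (qheight (qdownset q refl pA)).
Qed.

Lemma qstep A B f : qrel A B f -> (forall y, y \in elems B -> rle B y y) ->
  qrel (RAll A) (Rplus B) (fun x => Rint B (f x)).
Proof.
move=> q refl; have [fA fB H] := q.
split=> /=.
- by move=> x xA; rewrite map_f // fA.
- move=> y /mapP[b bB ->]; have [x xA <-] := fB b bB; by exists x.
- move=> p r pA rA; rewrite -!(qRint q refl) //.
  by rewrite /weaklt [Rint A r == _]eq_sym.
Qed.
End Q2.

Section Q3.
Variables T U : eqType.
Implicit Types (A : fposet T) (B : fposet U).

Lemma qcovers A B f x y : qrel A B f -> x \in elems A -> y \in elems A ->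
  covers B (f x) (f y) -> covers A x y.
Proof.
move=> q xA yA [_ _ /andP[nab lab] nc]; have [fA fB H] := q.
have nxy : x != y by apply: contraNneq nab => ->.
split=> //; first by rewrite /rlt nxy H // nab lab orbT.
move=> z zA [/andP[nxz lxz] /andP[nzy lzy]].
move: lxz lzy; rewrite !H // (negbTE nxz) (negbTE nzy) /= => /andP[n1 l1] /andP[n2 l2].
apply: (nc (f z) (fA _ zA)); split; apply/andP; split=> //.
Qed.

Lemma qgraded A B f : is_poset B -> qrel A B f -> graded A -> graded B.
Proof.
move=> [refl anti trans] q [[_ [_ [b [bA bmin]]]] [t [[tA tmax] [rho [rt rlt rc]]]]].
have [fA fB H] := q.
have ftop : is_top B (f t).
  split; first exact: fA.
  move=> y yB; have [x xA <-] := fB y yB.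
  move: (tmax x xA); rewrite H // => /orP[/eqP->|/andP[_ //]]; exact/refl/fA.
split.
  split; first by split.
  split; first by exists (f t).
  exists (f b); split; first exact: fA.
  move=> y yB; have [x xA <-] := fB y yB.
  move: (bmin x xA); rewrite H // => /orP[/eqP<-|/andP[_ //]]; exact/refl/fA.
exists (f t); split=> //.
pose g y := if y == f t then t else
  nth t (elems A) (find (fun x => f x == y) (elems A)).
have gP : forall y, y \in elems B -> g y \in elems A /\ f (g y) = y.
  move=> y yB; rewrite /g; case: eqP => [->//|_].
  have hs : has (fun x => f x == y) (elems A).
    by have [x xA fx] := fB y yB; apply/hasP; exists x => //; rewrite fx.
  split; first by rewrite mem_nth // -has_find.
  by apply/eqP; apply: (nth_find t hs).
exists (fun y => rho (g y)); split.
- by rewrite /g eqxx.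
- by move=> a aB; rewrite -(qheight q); apply: rlt; case: (gP a aB).
- move=> a c cv; have [aB cB _ _] := cv.
  have [gaA fga] := gP a aB; have [gcA fgc] := gP c cB.
  apply: rc; apply: (qcovers q) => //; by rewrite fga fgc.
Qed.
End Q3.

Lemma Rplus_poset (U : eqType) (X : fposet U) : is_poset (Rplus X).
Proof.
split=> /=.
- by move=> x _; rewrite /weakle !leqnn.
- move=> [a b] [c d] _ _; rewrite /weakle /= => /andP[h1 h2] /andP[h3 h4].
  by congr pair; apply/eqP; rewrite eqn_leq ?h1 ?h2 ?h3 ?h4.
- move=> [a b] [c d] [e g] _ _ _; rewrite /weakle /= => /andP[h1 h2] /andP[h3 h4].
  by rewrite (leq_trans h3 h1) (leq_trans h4 h2).
Qed.

Lemma iter_q (T : eqType) (P : fposet T) (m : nat) : is_poset P ->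
  is_poset (projT2 (Rplus_iter m P)) /\
  exists f : T -> projT1 (Rplus_iter m P),
    qrel (RAll_iter m P) (projT2 (Rplus_iter m P)) f.
Proof.
move=> pP; elim: m => [|m [pm [f qf]]].
- split=> //; exists id; have [refl _ _] := pP.
  split=> // [y yP|p q pA qA]; first by exists y.
  by case: eqVneq => [->|_]; rewrite /= ?refl.
- split; first exact: Rplus_poset.
  exists (fun x => Rint (projT2 (Rplus_iter m P)) (f x)).
  have [refl _ _] := pm.
  exact: qstep qf refl.
Qed.

Theorem lemma2 (T : eqType) (P : fposet T) (m : nat) :
  bounded P -> 2 <= size (undup (elems P)) ->
  graded (RAll_iter m P) -> graded_s (Rplus_iter m P).
Proof.
move=> [pP _] _ g.
have [pm [f qf]] := iter_q m pP.
exact: qgraded pm qf g.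
Qed.
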